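(* Let $D=(-\pi/2,\pi/2)\times(-\pi/2,\pi/2)\subset\mathbb{R}^2$. Let $L$ be the space of functions $u:\overline D\to\mathbb{R}$ such that each $u$ is $C^\infty$ on some open set containing $\overline D$ and vanishes on $\partial D$. Then there exist $u,v\in L$ with $v\neq u$ and $v\neq -u$ such that $$u\,\Delta u=v\,\Delta v\quad\text{in } D.$$ In other words, for some continuous function $g$ on $\overline D$, the Dirichlet problem $$u\,\Delta u=g\ \text{in } D,\qquad u=0\ \text{on } \partial D$$ has more than two solutions in $L$.
   Context: $\Delta=\partial^2/\partial x^2+\partial^2/\partial y^2$ is the Laplacian, and $\partial D$ is the boundary of the square $D$. *)

(* Defs.v *)
From Stdlib Require Export Reals Lra.
Open Scope R_scope.

Definition in_closed_square (x y : R) : Prop :=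
  -(PI/2) <= x <= PI/2 /\ -(PI/2) <= y <= PI/2.

Definition in_open_square (x y : R) : Prop :=
  -(PI/2) < x < PI/2 /\ -(PI/2) < y < PI/2.

Definition on_boundary (x y : R) : Prop :=
  in_closed_square x y /\ ~ in_open_square x y.

Definition open2 (U : R -> R -> Prop) : Prop :=
  forall x y, U x y -> exists r, 0 < r /\
    forall x' y', (x' - x)^2 + (y' - y)^2 < r^2 -> U x' y'.

Definition continuous2_on (U : R -> R -> Prop) (f : R -> R -> R) : Prop :=
  forall x y, U x y -> forall eps, 0 < eps -> exists delta, 0 < delta /\
    forall x' y', (x' - x)^2 + (y' - y)^2 < delta^2 ->
      Rabs (f x' y' - f x y) < eps.

(* f is C^infinity on the open set U: there is a family F i j (playing the role
   of d^i/dx^i d^j/dy^j f) with F 0 0 = f on U, every F i j continuous on U,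
   and the partial derivatives of F i j in x and in y being F (i+1) j and
   F i (j+1) on U. *)
Definition smooth_on (U : R -> R -> Prop) (f : R -> R -> R) : Prop :=
  exists F : nat -> nat -> R -> R -> R,
    (forall x y, U x y -> F O O x y = f x y) /\
    forall i j, continuous2_on U (F i j) /\
      forall x y, U x y ->
        derivable_pt_lim (fun t => F i j t y) x (F (S i) j x y) /\
        derivable_pt_lim (fun t => F i j x t) y (F i (S j) x y).

Definition in_L (u : R -> R -> R) : Prop :=
  exists U : R -> R -> Prop,
    open2 U /\ (forall x y, in_closed_square x y -> U x y) /\
    smooth_on U u /\
    (forall x y, on_boundary x y -> u x y = 0).

Definition second_dx (f : R -> R -> R) (x y l : R) : Prop :=
  exists g : R -> R, exists delta, 0 < delta /\
    (forall t, Rabs (t - x) < delta -> derivable_pt_lim (fun s => f s y) t (g t)) /\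
    derivable_pt_lim g x l.

Definition second_dy (f : R -> R -> R) (x y l : R) : Prop :=
  exists g : R -> R, exists delta, 0 < delta /\
    (forall t, Rabs (t - y) < delta -> derivable_pt_lim (fun s => f x s) t (g t)) /\
    derivable_pt_lim g y l.

Definition is_laplacian (f : R -> R -> R) (x y l : R) : Prop :=
  exists a b, second_dx f x y a /\ second_dy f x y b /\ l = a + b.

(* Main.v *)
Require Import Defs.
From Stdlib Require Import Reals Lra Lia ClassicalEpsilon Classical FunctionalExtensionality.
Open Scope R_scope.

Lemma exp_mul_pow m a : exp (INR m * a) = exp a ^ m.
Proof. induction m. simpl. rewrite Rmult_0_l, exp_0. auto.
rewrite S_INR, Rmult_plus_distr_r, Rmult_1_l, exp_plus, IHm. simpl. ring. Qed.

Lemma Gb n h : 0 < h -> exp (- / h) * (/ h)^n <= INR (S n) ^ (S n) * h.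
Proof.
intro Hh. set (s := / h). set (m := INR (S n)).
assert (Hs : 0 < s) by (apply Rinv_0_lt_compat; auto).
assert (Hm : 0 < m) by (apply lt_0_INR; lia).
assert (E1 : exp s = exp (s/m) ^ (S n)).
{ rewrite <- exp_mul_pow. f_equal. fold m. field. lra. }
assert (E2 : (s/m) ^ (S n) <= exp s).
{ rewrite E1. apply pow_incr. split. apply Rlt_le. apply Rdiv_lt_0_compat; auto.
  assert (s/m <> 0). apply Rgt_not_eq, Rdiv_lt_0_compat; auto.
  pose proof (exp_ineq1 (s/m) H). lra. }
assert (Hp : 0 < (s/m)^(S n)) by (apply pow_lt; apply Rdiv_lt_0_compat; auto).
rewrite exp_Ropp.
assert (h = / s) by (unfold s; rewrite Rinv_inv; auto).
rewrite H.
apply Rle_trans with (s ^ n / (s/m)^(S n)).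
- unfold Rdiv. rewrite Rmult_comm. apply Rmult_le_compat_l. apply pow_le; lra.
  apply Rinv_le_contravar; auto.
- right. simpl. unfold Rdiv. rewrite Rpow_mult_distr, pow_inv. field. repeat split; try lra; apply pow_nonzero; lra.
Qed.

From Coquelicot Require Import Coquelicot.

Lemma gder n t : 0 < t -> derivable_pt_lim (fun s => exp (- / s) * (/ s)^n) t
   (exp (- / t) * (/ t)^(S (S n)) - INR n * (exp (- / t) * (/ t)^(S n))).
Proof.
intro Ht. apply is_derive_Reals.
auto_derive. lra.
destruct n. simpl. field. lra.
rewrite S_INR. simpl. field. lra.
Qed.

Definition G (n : nat) (t : R) : R := if Rlt_dec 0 t then exp (- / t) * (/ t)^n else 0.

Lemma dpl_ext f g x l a b : a < x < b -> (forall t, a < t < b -> f t = g t) ->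
  derivable_pt_lim f x l -> derivable_pt_lim g x l.
Proof.
intros Hx Heq H eps Heps. destruct (H eps Heps) as [d Hd].
assert (Hp : 0 < Rmin d (Rmin (x-a) (b-x))).
{ apply Rmin_pos. apply cond_pos. apply Rmin_pos; lra. }
exists (mkposreal _ Hp). simpl. intros h Hh0 Hhd.
assert (H1 := Rmin_l d (Rmin (x-a) (b-x))).
assert (H2 := Rmin_r d (Rmin (x-a) (b-x))).
assert (H3 := Rmin_l (x-a) (b-x)). assert (H4 := Rmin_r (x-a) (b-x)).
assert (Habs : - Rmin d (Rmin (x-a) (b-x)) < h < Rmin d (Rmin (x-a) (b-x))).
{ unfold Rabs in Hhd. destruct (Rcase_abs h); lra. }
rewrite <- !Heq by lra. apply Hd; auto. lra.
Qed.

Lemma G_nonneg n t : 0 <= G n t.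
Proof. unfold G. destruct (Rlt_dec 0 t). apply Rmult_le_pos. left; apply exp_pos.
apply pow_le. left; apply Rinv_0_lt_compat; auto. lra. Qed.

Lemma G_le0 n t : t <= 0 -> G n t = 0.
Proof. intro. unfold G. destruct (Rlt_dec 0 t); auto. lra. Qed.

Lemma G_deriv n t : derivable_pt_lim (G n) t (G (S (S n)) t - INR n * G (S n) t).
Proof.
destruct (Rlt_dec 0 t) as [Ht|Ht].
- apply dpl_ext with (fun s => exp (- / s) * (/ s)^n) 0 (t+1). lra.
  intros s Hs. unfold G. destruct (Rlt_dec 0 s); auto. lra.
  unfold G. destruct (Rlt_dec 0 t); try lra. apply gder; auto.
- destruct (Rle_lt_or_eq_dec t 0) as [Ht'|Ht']. lra.
  + rewrite !G_le0 by lra.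
    apply dpl_ext with (fct_cte 0) (t-1) 0. lra.
    intros s Hs. unfold fct_cte. rewrite G_le0; lra.
    replace (0 - INR n * 0) with 0 by ring. apply derivable_pt_lim_const.
  + subst t. rewrite !G_le0 by lra. replace (0 - INR n * 0) with 0 by ring.
    intros eps Heps.
    set (C := INR (S (S n)) ^ (S (S n))).
    assert (HC : 0 < C) by (apply pow_lt; apply lt_0_INR; lia).
    assert (Hp : 0 < eps / C) by (apply Rdiv_lt_0_compat; auto).
    exists (mkposreal _ Hp). simpl. intros h Hh0 Hhd.
    rewrite Rplus_0_l, (G_le0 n 0) by lra.
    destruct (Rlt_dec 0 h) as [Hh|Hh].
    * assert (E : (G n h - 0) / h - 0 = exp (- / h) * (/ h)^(S n)).
      { unfold G. destruct (Rlt_dec 0 h); try lra. simpl. field. lra. }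
      rewrite E. pose proof (Gb (S n) h Hh). fold C in H.
      rewrite Rabs_right. 2:{ apply Rle_ge, Rmult_le_pos. left; apply exp_pos. apply pow_le. left; apply Rinv_0_lt_compat; auto. }
      rewrite Rabs_right in Hhd by lra.
      apply Rle_lt_trans with (C * h); auto.
      apply Rmult_lt_compat_l with (r := C) in Hhd; auto.
      replace (C * (eps / C)) with eps in Hhd by (field; lra). lra.
    * rewrite G_le0 by lra. replace ((0 - 0) / h - 0) with 0 by (field; auto).
      rewrite Rabs_R0. auto.
Qed.

Inductive Cls : (R -> R) -> Prop :=
| C_G n : Cls (G n)
| C_cos : Cls cos
| C_sin : Cls sin
| C_const c : Cls (fun _ => c)
| C_add f g : Cls f -> Cls g -> Cls (fun t => f t + g t)
| C_mul f g : Cls f -> Cls g -> Cls (fun t => f t * g t)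
| C_comp a b f : Cls f -> Cls (fun t => f (a * t + b)).

Lemma dpl_eq f x l l' : l = l' -> derivable_pt_lim f x l -> derivable_pt_lim f x l'.
Proof. intros ->; auto. Qed.

Lemma aff_der a b t : derivable_pt_lim (fun t => a * t + b) t a.
Proof. apply is_derive_Reals. auto_derive; auto. ring. Qed.

Lemma Cls_deriv f : Cls f -> exists f', Cls f' /\ forall t, derivable_pt_lim f t (f' t).
Proof.
induction 1.
- exists (fun t => G (S (S n)) t + (fun _ => - INR n) t * G (S n) t). split.
  exact (C_add _ _ (C_G _) (C_mul _ _ (C_const _) (C_G _))).
  intro t. eapply dpl_eq. 2: apply G_deriv. ring.
- exists (fun t => (fun _ => -1) t * sin t). split.
  exact (C_mul _ _ (C_const _) C_sin).
  intro t. eapply dpl_eq. 2: apply derivable_pt_lim_cos. ring.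
- exists cos. split. constructor. apply derivable_pt_lim_sin.
- exists (fun _ => 0). split. constructor. intro t. apply derivable_pt_lim_const.
- destruct IHCls1 as [f' [Hf1 Hf2]]. destruct IHCls2 as [g' [Hg1 Hg2]].
  exists (fun t => f' t + g' t). split. constructor; auto.
  intro t. apply derivable_pt_lim_plus; auto.
- destruct IHCls1 as [f' [Hf1 Hf2]]. destruct IHCls2 as [g' [Hg1 Hg2]].
  exists (fun t => f' t * g t + f t * g' t). split.
  exact (C_add _ _ (C_mul _ _ Hf1 H0) (C_mul _ _ H Hg1)).
  intro t. apply derivable_pt_lim_mult; auto.
- destruct IHCls as [f' [Hf1 Hf2]].
  exists (fun t => (fun _ => a) t * f' (a * t + b)). split.
  exact (C_mul _ _ (C_const _) (C_comp _ _ _ Hf1)).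
  intro t. eapply dpl_eq. 2: apply (derivable_pt_lim_comp (fun t => a * t + b) f t a).
  apply Rmult_comm. apply aff_der. apply Hf2.
Qed.

Lemma Dex f : exists f', Cls f -> Cls f' /\ forall t, derivable_pt_lim f t (f' t).
Proof.
destruct (classic (Cls f)) as [H|H].
- destruct (Cls_deriv f H) as [f' Hf]. exists f'; auto.
- exists f. intro; contradiction.
Qed.

Definition Dop (f : R -> R) : R -> R := proj1_sig (constructive_indefinite_description _ (Dex f)).

Fixpoint Dn (n : nat) (f : R -> R) : R -> R :=
  match n with O => f | S m => Dop (Dn m f) end.

Lemma Dop_spec f : Cls f -> Cls (Dop f) /\ forall t, derivable_pt_lim f t (Dop f t).
Proof. intro Hf. unfold Dop. destruct (constructive_indefinite_description _ (Dex f)) as [f' Hf']. simpl. auto. Qed.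

Lemma Dn_spec f : Cls f -> forall n, Cls (Dn n f) /\ forall t, derivable_pt_lim (Dn n f) t (Dn (S n) f t).
Proof.
intros Hf n. induction n.
- simpl. split; auto. apply Dop_spec; auto.
- destruct IHn as [H1 H2]. destruct (Dop_spec _ H1) as [H3 H4].
  split. exact H3. apply (Dop_spec _ H3).
Qed.

Lemma Dn_lin f g c : Cls f -> Cls g -> forall n t,
  Dn n (fun s => f s + c * g s) t = Dn n f t + c * Dn n g t.
Proof.
intros Hf Hg n. induction n; intro t. reflexivity.
assert (Hh : Cls (fun s => f s + c * g s)).
{ exact (C_add _ _ Hf (C_mul _ _ (C_const c) Hg)). }
destruct (Dn_spec _ Hh n) as [_ H1].
destruct (Dn_spec _ Hf n) as [_ H2]. destruct (Dn_spec _ Hg n) as [_ H3].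
assert (E : Dn n (fun s => f s + c * g s) = fun s => Dn n f s + c * Dn n g s).
{ apply functional_extensionality. exact IHn. }
specialize (H1 t). rewrite E in H1.
apply (uniqueness_limite _ t _ _ H1).
apply (derivable_pt_lim_plus (Dn n f) (fun s => c * Dn n g s)). apply H2.
apply (derivable_pt_lim_scal (Dn n g)). apply H3.
Qed.

Lemma zero_on f a b : Cls f -> (forall t, a < t < b -> f t = 0) ->
  forall n t, a < t < b -> Dn n f t = 0.
Proof.
intros Hf Hz n. induction n; intros t Ht. simpl. auto.
destruct (Dn_spec _ Hf n) as [_ H1].
apply (uniqueness_limite (Dn n f) t). apply H1.
apply dpl_ext with (fct_cte 0) a b; auto.
intros s Hs. unfold fct_cte. symmetry. auto.
apply derivable_pt_lim_const.
Qed.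

Lemma cont_eps f x : continuity_pt f x -> forall eps, 0 < eps ->
  exists d, 0 < d /\ forall x', Rabs (x' - x) < d -> Rabs (f x' - f x) < eps.
Proof.
intros H eps Heps. destruct (H eps Heps) as [d [Hd Hd2]]. exists d. split; auto.
intros x' Hx'. destruct (Req_dec x' x) as [E|Hne].
rewrite E, Rminus_diag, Rabs_R0; auto.
apply Hd2. split. split. exact I. auto. simpl. unfold Rdist. auto.
Qed.

Lemma Dn_cont f : Cls f -> forall n t, continuity_pt (Dn n f) t.
Proof.
intros Hf n t. destruct (Dn_spec _ Hf n) as [_ H].
apply derivable_continuous_pt. exists (Dn (S n) f t). apply H.
Qed.

Lemma sq_abs a d : 0 < d -> a ^ 2 < d ^ 2 -> Rabs a < d.
Proof. intros Hd H. unfold Rabs. destruct (Rcase_abs a); nra. Qed.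

Lemma cont_prod A B : (forall t, continuity_pt A t) -> (forall t, continuity_pt B t) ->
  continuous2_on (fun _ _ => True) (fun x y => A x * B y).
Proof.
intros HA HB x y _ eps Heps.
set (K := 1 + Rabs (A x) + Rabs (B y)).
assert (HK : 0 < K) by (unfold K; pose proof (Rabs_pos (A x)); pose proof (Rabs_pos (B y)); lra).
set (e := Rmin 1 (eps / (2 * K))).
assert (He : 0 < e). { apply Rmin_pos. lra. apply Rdiv_lt_0_compat; lra. }
assert (He1 : e <= 1) by apply Rmin_l.
assert (He2 : e <= eps / (2 * K)) by apply Rmin_r.
destruct (cont_eps A x (HA x) e He) as [d1 [Hd1 H1]].
destruct (cont_eps B y (HB y) e He) as [d2 [Hd2 H2]].
exists (Rmin d1 d2). split. apply Rmin_pos; auto.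
intros x' y' Hxy.
assert (Hm : 0 < Rmin d1 d2) by (apply Rmin_pos; auto).
assert (Hx : Rabs (x' - x) < d1).
{ apply Rlt_le_trans with (Rmin d1 d2). apply sq_abs; auto.
  pose proof (pow2_ge_0 (y' - y)). lra. apply Rmin_l. }
assert (Hy : Rabs (y' - y) < d2).
{ apply Rlt_le_trans with (Rmin d1 d2). apply sq_abs; auto.
  pose proof (pow2_ge_0 (x' - x)). lra. apply Rmin_r. }
specialize (H1 x' Hx). specialize (H2 y' Hy).
replace (A x' * B y' - A x * B y) with
  ((A x' - A x) * (B y' - B y) + (A x' - A x) * B y + A x * (B y' - B y)) by ring.
assert (eK : e * K <= eps / 2).
{ apply Rmult_le_compat_r with (r := K) in He2. 2: lra.
  replace (eps / (2 * K) * K) with (eps / 2) in He2 by (field; lra). lra. }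
pose proof (Rabs_pos (A x' - A x)). pose proof (Rabs_pos (B y' - B y)).
pose proof (Rabs_pos (A x)). pose proof (Rabs_pos (B y)).
eapply Rle_lt_trans. apply Rabs_triang.
eapply Rle_lt_trans. apply Rplus_le_compat_r. apply Rabs_triang.
rewrite !Rabs_mult.
assert (Rabs (A x' - A x) * Rabs (B y' - B y) <= e * e).
{ apply Rmult_le_compat; lra. }
assert (Rabs (A x' - A x) * Rabs (B y) <= e * Rabs (B y)).
{ apply Rmult_le_compat_r; lra. }
assert (Rabs (A x) * Rabs (B y' - B y) <= Rabs (A x) * e).
{ apply Rmult_le_compat_l; lra. }
assert (e * e <= e) by nra.
unfold K in eK. nra.
Qed.

Lemma dpl_mulc f t l c : derivable_pt_lim f t l -> derivable_pt_lim (fun s => f s * c) t (l * c).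
Proof. intro H. eapply dpl_eq. 2: apply (derivable_pt_lim_mult f (fct_cte c) t l 0); auto.
unfold fct_cte. ring. apply derivable_pt_lim_const. Qed.

Lemma dpl_cmul f t l c : derivable_pt_lim f t l -> derivable_pt_lim (fun s => c * f s) t (c * l).
Proof. intro H. apply (derivable_pt_lim_scal f c t l H). Qed.

Lemma lap_prod A B : Cls A -> Cls B -> forall x y,
  is_laplacian (fun x y => A x * B y) x y (Dn 2 A x * B y + A x * Dn 2 B y).
Proof.
intros HA HB x y. exists (Dn 2 A x * B y), (A x * Dn 2 B y). split; [|split]; auto.
- exists (fun t => Dn 1 A t * B y), 1. split. lra. split.
  + intros t _. apply dpl_mulc. apply (Dn_spec _ HA 0).
  + apply dpl_mulc. apply (Dn_spec _ HA 1).
- exists (fun t => A x * Dn 1 B t), 1. split. lra. split.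
  + intros t _. apply dpl_cmul. apply (Dn_spec _ HB 0).
  + apply dpl_cmul. apply (Dn_spec _ HB 1).
Qed.

Lemma bdry x y : on_boundary x y -> x = PI/2 \/ x = - (PI/2) \/ y = PI/2 \/ y = -(PI/2).
Proof.
unfold on_boundary, in_closed_square, in_open_square. intros [[H1 H2] H3].
destruct (Req_dec x (PI/2)); auto. destruct (Req_dec x (-(PI/2))); auto.
destruct (Req_dec y (PI/2)); auto. destruct (Req_dec y (-(PI/2))); auto.
exfalso. apply H3. lra.
Qed.

Lemma in_L_prod A B : Cls A -> Cls B -> A (PI/2) = 0 -> A (-(PI/2)) = 0 ->
  B (PI/2) = 0 -> B (-(PI/2)) = 0 -> in_L (fun x y => A x * B y).
Proof.
intros HA HB H1 H2 H3 H4. exists (fun _ _ => True). split; [|split; [|split]].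
- intros x y _. exists 1. split. lra. auto.
- auto.
- exists (fun i j x y => Dn i A x * Dn j B y). split. simpl. auto.
  intros i j. split.
  + apply (cont_prod (Dn i A) (Dn j B)); apply Dn_cont; auto.
  + intros x y _. split.
    * apply dpl_mulc. apply (Dn_spec _ HA i).
    * apply dpl_cmul. apply (Dn_spec _ HB j).
- intros x y Hb. destruct (bdry x y Hb) as [E|[E|[E|E]]]; rewrite E;
  rewrite ?H1, ?H2, ?H3, ?H4; ring.
Qed.

Definition f1 : R -> R := fun x => G 0 x * cos x.
Definition f2 : R -> R := fun x => G 0 (-1 * x + 0) * cos x.
Lemma Cf1 : Cls f1. Proof. exact (C_mul _ _ (C_G 0) C_cos). Qed.
Lemma Cf2 : Cls f2. Proof. exact (C_mul _ _ (C_comp _ _ _ (C_G 0)) C_cos). Qed.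

Lemma cosPI2m : cos (-(PI/2)) = 0.
Proof. rewrite cos_neg. apply cos_PI2. Qed.

Lemma f12 x : f1 x * f2 x = 0.
Proof. unfold f1, f2. destruct (Rle_dec x 0).
rewrite (G_le0 0 x) by lra. ring. rewrite (G_le0 0 (-1 * x + 0)) by lra. ring. Qed.

Lemma f1d2 x : f1 x * Dn 2 f2 x = 0.
Proof. destruct (Rle_dec x 0).
unfold f1 at 1. rewrite (G_le0 0 x) by lra. ring.
rewrite (zero_on f2 0 (x+1) Cf2). ring.
intros t Ht. unfold f2. rewrite G_le0 by lra. ring. lra. Qed.

Lemma f2d1 x : f2 x * Dn 2 f1 x = 0.
Proof. destruct (Rle_dec 0 x).
unfold f2 at 1. rewrite (G_le0 0 (-1 * x + 0)) by lra. ring.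
rewrite (zero_on f1 (x-1) 0 Cf1). ring.
intros t Ht. unfold f1. rewrite G_le0 by lra. ring. lra. Qed.

Theorem theorem4 :
  exists u v : R -> R -> R,
    in_L u /\ in_L v /\
    (exists x y, in_closed_square x y /\ v x y <> u x y) /\
    (exists x y, in_closed_square x y /\ v x y <> - u x y) /\
    (forall x y, in_open_square x y ->
       exists lu lv, is_laplacian u x y lu /\ is_laplacian v x y lv /\
         u x y * lu = v x y * lv).
Proof.
set (p := fun s => f1 s + 1 * f2 s). set (q := fun s => f1 s + (-1) * f2 s).
assert (Cp : Cls p) by exact (C_add _ _ Cf1 (C_mul _ _ (C_const 1) Cf2)).
assert (Cq : Cls q) by exact (C_add _ _ Cf1 (C_mul _ _ (C_const (-1)) Cf2)).
assert (Z1 : f1 (PI/2) = 0) by (unfold f1; rewrite cos_PI2; ring).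
assert (Z2 : f2 (PI/2) = 0) by (unfold f2; rewrite cos_PI2; ring).
assert (Z3 : f1 (-(PI/2)) = 0) by (unfold f1; rewrite cosPI2m; ring).
assert (Z4 : f2 (-(PI/2)) = 0) by (unfold f2; rewrite cosPI2m; ring).
assert (HP := PI2_1).
assert (c1 : 0 < cos 1) by (apply cos_gt_0; lra).
assert (c1' : 0 < cos (-1)) by (apply cos_gt_0; lra).
assert (g1 : 0 < G 0 1).
{ unfold G. destruct (Rlt_dec 0 1); try lra. simpl. rewrite Rmult_1_r. apply exp_pos. }
assert (A1 : f1 1 > 0) by (unfold f1; apply Rmult_lt_0_compat; auto).
assert (A2 : f2 1 = 0) by (unfold f2; rewrite G_le0 by lra; ring).
assert (A3 : f1 (-1) = 0) by (unfold f1; rewrite G_le0 by lra; ring).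
assert (A4 : f2 (-1) > 0).
{ unfold f2. replace (-1 * -1 + 0) with 1 by ring. apply Rmult_lt_0_compat; auto. }
exists (fun x y => p x * cos y), (fun x y => q x * cos y).
split; [|split; [|split; [|split]]].
- apply in_L_prod; auto. constructor. unfold p; rewrite Z1, Z2; ring.
  unfold p; rewrite Z3, Z4; ring. apply cos_PI2. apply cosPI2m.
- apply in_L_prod; auto. constructor. unfold q; rewrite Z1, Z2; ring.
  unfold q; rewrite Z3, Z4; ring. apply cos_PI2. apply cosPI2m.
- exists (-1), 0. split. unfold in_closed_square. lra.
  unfold p, q. rewrite cos_0, A3. lra.
- exists 1, 0. split. unfold in_closed_square. lra.
  unfold p, q. rewrite cos_0, A2. lra.
- intros x y _.
  exists (Dn 2 p x * cos y + p x * Dn 2 cos y), (Dn 2 q x * cos y + q x * Dn 2 cos y).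
  split; [|split].
  + apply (lap_prod p cos Cp C_cos).
  + apply (lap_prod q cos Cq C_cos).
  + unfold p, q. rewrite !(Dn_lin f1 f2 _ Cf1 Cf2).
    pose proof (f12 x). pose proof (f1d2 x). pose proof (f2d1 x).
    apply Rminus_diag_uniq.
    set (a := f1 x) in *. set (b := f2 x) in *. set (a2 := Dn 2 f1 x) in *.
    set (b2 := Dn 2 f2 x) in *.
    replace ((a + 1 * b) * cos y * ((a2 + 1 * b2) * cos y + (a + 1 * b) * Dn 2 cos y) -
       (a + -1 * b) * cos y * ((a2 + -1 * b2) * cos y + (a + -1 * b) * Dn 2 cos y))
    with (2 * cos y * cos y * (a * b2 + b * a2) + 4 * cos y * Dn 2 cos y * (a * b)) by ring.
    rewrite H, H0. replace (b * a2) with (a2 * b) by ring. rewrite Rmult_comm in H1.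
    rewrite H1. ring.
Qed.
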